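(* Let $q$ be a prime power and $\mathcal{L}$ a non-empty set of lines of $\mathrm{PG}(n,q)$ satisfying (Pt), (Pl), (Sd) and (To) (see context). Suppose $\mathcal{L}$ contains a pentagon with vertices $A,B,C,D,E$, and let $U=\langle A,B,C,D,E\rangle$. Then $|\mathcal{L}_U|\ge 5q$ and $\dim(U)=4$.
   Context: (Pt): every point of $\mathrm{PG}(n,q)$ lies on $0$ or $q+1$ lines of $\mathcal{L}$. (Pl): every plane contains $0$, $1$ or $q+1$ lines of $\mathcal{L}$. (Sd): every solid ($3$-dimensional subspace) contains $0$, $1$, $q+1$ or $2q+1$ lines of $\mathcal{L}$. (To): $|\mathcal{L}|\le q^5+q^4+q^3+q^2+q+1$. For a subspace $U$, $\mathcal{L}_U$ is the set of lines of $\mathcal{L}$ contained in $U$. A pentagon of $\mathcal{L}$ with vertices $A,B,C,D,E$ is a set of five pairwise distinct points such that the lines $AB,BC,CD,DE,EA$ all belong to $\mathcal{L}$ and are pairwise distinct. *)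

(* Defs.v *)
From HB Require Import structures.
From mathcomp Require Import all_boot all_order all_algebra.
Set Implicit Arguments. Unset Strict Implicit. Unset Printing Implicit Defensive.
Import GRing.Theory.
Local Open Scope ring_scope.

(* PG(n,q) = projective space of the vector space 'rV[F]_(n.+1) over a finite
   field F with q = #|F| elements.  Projective subspaces of projective
   dimension k are vector subspaces of dimension k+1. *)

Import VectorInternalTheory.
Section PG.
Variables (F : finFieldType) (n : nat).
HB.instance Definition _ := [Countable of {vspace 'rV[F]_(n.+1)} by <:].
HB.instance Definition _ := [Finite of {vspace 'rV[F]_(n.+1)} by <:].
End PG.

Definition PGsub (F : finFieldType) (n : nat) := {vspace 'rV[F]_(n.+1)}.

Definition is_point F n (U : PGsub F n) := \dim U == 1%N.
Definition is_line  F n (U : PGsub F n) := \dim U == 2%N.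
Definition is_plane F n (U : PGsub F n) := \dim U == 3%N.
Definition is_solid F n (U : PGsub F n) := \dim U == 4%N.

Definition LinesIn F n (L : {set PGsub F n}) (U : PGsub F n) :=
  [set l in L | (l <= U)%VS].

Definition cond_Pt F n (L : {set PGsub F n}) :=
  forall P : PGsub F n, is_point P ->
    let k := #|[set l in L | (P <= l)%VS]| in k = 0%N \/ k = (#|F| + 1)%N.

Definition cond_Pl F n (L : {set PGsub F n}) :=
  forall P : PGsub F n, is_plane P ->
    let k := #|LinesIn L P| in [\/ k = 0%N, k = 1%N | k = (#|F| + 1)%N].

Definition cond_Sd F n (L : {set PGsub F n}) :=
  forall S : PGsub F n, is_solid S ->
    let k := #|LinesIn L S| in
    [\/ k = 0%N, k = 1%N, k = (#|F| + 1)%N | k = (2 * #|F| + 1)%N].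

Definition cond_To F n (L : {set PGsub F n}) :=
  let q := #|F| in (#|L| <= q^5 + q^4 + q^3 + q^2 + q + 1)%N.

Definition pentagon F n (L : {set PGsub F n}) (A B C D E : PGsub F n) :=
  [/\ [/\ is_point A, is_point B, is_point C, is_point D & is_point E],
      uniq [:: A; B; C; D; E],
      [/\ (A + B)%VS \in L, (B + C)%VS \in L, (C + D)%VS \in L,
          (D + E)%VS \in L & (E + A)%VS \in L]
    & uniq [:: (A + B)%VS; (B + C)%VS; (C + D)%VS; (D + E)%VS; (E + A)%VS]].

(* Main.v *)
Require Import Defs.
From HB Require Import structures.
From mathcomp Require Import all_boot all_order all_algebra.
From mathcomp Require Import zify.

Set Implicit Arguments.
Section Aux.
Variables (F : finFieldType) (n : nat).
Implicit Types (U V W X Y Z P l m : PGsub F n) (L : {set PGsub F n}).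

Lemma eq_dim_sub {U V} : (U <= V)%VS -> (\dim V <= \dim U)%N -> U = V.
Proof. by move=> h1 h2; apply/eqP; rewrite eqEdim h1 h2. Qed.

Lemma cap_small {U V} : ~~ (U <= V)%VS -> (\dim (U :&: V) < \dim U)%N.
Proof.
move=> h; rewrite ltn_neqAle dimvS ?capvSl // andbT; apply: contra h => /eqP e.
have <- : (U :&: V)%VS = U by apply: eq_dim_sub; [exact: capvSl| rewrite e].
exact: capvSr.
Qed.

Lemma dim_add_pt {W P} : \dim P = 1%N -> ~~ (P <= W)%VS ->
  \dim (W + P) = (\dim W + 1)%N.
Proof.
move=> dP h; have := dimv_sum_cap W P; have := cap_small h.
rewrite capvC dP => h2; have -> : \dim (W :&: P) = 0%N by lia. lia.
Qed.

Lemma dim_add_meet {W m Y} : \dim Y = 1%N -> \dim m = 2%N -> (Y <= W)%VS ->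
  (Y <= m)%VS -> ~~ (m <= W)%VS -> (\dim (W + m) + 1 = \dim W + 2)%N.
Proof.
move=> dY dm YW Ym h; have := dimv_sum_cap W m; have := cap_small h.
have : (\dim Y <= \dim (W :&: m))%N by apply: dimvS; rewrite subv_cap YW Ym.
rewrite capvC dY dm; lia.
Qed.

Lemma small_lines L W : (forall l, l \in L -> is_line l) ->
  (\dim W <= 2)%N -> (#|LinesIn L W| <= 1)%N.
Proof.
move=> HL dW; apply: (@leq_trans #|[set W]|); last by rewrite cards1.
apply: subset_leq_card; apply/subsetP => l; rewrite !inE => /andP[lL lW].
apply/eqP; apply: eq_dim_sub lW _; move: (HL l lL); rewrite /is_line => /eqP ->.
done.
Qed.

Lemma LinesS L U V : (U <= V)%VS -> LinesIn L U \subset LinesIn L V.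
Proof.
move=> h; apply/subsetP => l; rewrite !inE => /andP[-> lU] /=.
exact: subv_trans lU h.
Qed.

Lemma LinesI L U V : LinesIn L U :&: LinesIn L V \subset LinesIn L (U :&: V)%VS.
Proof.
apply/subsetP => l; rewrite !inE => /andP[/andP[-> lU] /andP[_ lV]] /=.
by rewrite subv_cap lU lV.
Qed.

Lemma cardU_ge (T : finType) (A B : {set T}) :
  (#|A| + #|B| <= #|A :|: B| + #|A :&: B|)%N.
Proof. by rewrite cardsUI. Qed.

Lemma cardIU_le (T : finType) (A B C : {set T}) :
  (#|(A :|: B) :&: C| <= #|A :&: C| + #|B :&: C|)%N.
Proof. by rewrite setIUl -cardsUI leq_addr. Qed.

Definition pencil L X := [set l in L | (X <= l)%VS].

Ltac subv_tac := match goal with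
  | |- is_true (?P <= ?U + ?V)%VS =>
      first [ exact: subvv
            | apply: (subv_trans _ (addvSl U V)); subv_tac
            | apply: (subv_trans _ (addvSr U V)); subv_tac ]
  | |- _ => exact: subvv end.

Ltac vtac := rewrite ?subv_add; repeat (apply/andP; split); subv_tac.

Lemma pencil_plane L X Y Z :
  (forall l, l \in L -> is_line l) ->
  cond_Pt L -> cond_Pl L -> cond_Sd L ->
  is_point X -> is_point Y -> is_point Z ->
  (X + Y)%VS \in L -> (Y + Z)%VS \in L -> (X + Y)%VS != (Y + Z)%VS ->
  pencil L Y = LinesIn L (X + Y + Z)%VS /\ #|pencil L Y| = (#|F| + 1)%N.
Proof.
move=> HL Pt Pl Sd pX pY pZ l1L l2L l12.
have q2 : (1 < #|F|)%N := card_finNzRing_gt1 F.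
have dY : \dim Y = 1%N by apply/eqP.
have dZ : \dim Z = 1%N by apply/eqP.
have d1 : \dim (X + Y) = 2%N by apply/eqP; exact: HL.
have d2 : \dim (Y + Z) = 2%N by apply/eqP; exact: HL.
have Yl1 : (Y <= X + Y)%VS by vtac.
have l1pi : (X + Y <= X + Y + Z)%VS by vtac.
have l2pi : (Y + Z <= X + Y + Z)%VS by vtac.
have Zl1 : ~~ (Z <= X + Y)%VS.
  apply: contra l12 => h; apply/eqP; symmetry; apply: eq_dim_sub; last by rewrite d1 d2.
  by rewrite subv_add Yl1 h.
have dpi : \dim (X + Y + Z) = 3%N by rewrite dim_add_pt // d1.
have cardpi : #|LinesIn L (X + Y + Z)%VS| = (#|F| + 1)%N.
  have : (1 < #|LinesIn L (X + Y + Z)%VS|)%N.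
    by apply/card_gt1P; exists (X + Y)%VS, (Y + Z)%VS; rewrite !inE l1L l2L l1pi l2pi l12.
  by case: (Pl _ (introT eqP dpi)) => ->.
have cardY : #|pencil L Y| = (#|F| + 1)%N.
  have : (0 < #|pencil L Y|)%N by apply/card_gt0P; exists (X + Y)%VS; rewrite inE l1L Yl1.
  by case: (Pt _ pY) => ->.
have sub : pencil L Y \subset LinesIn L (X + Y + Z)%VS.
  apply/subsetP => m; rewrite !inE => /andP[mL Ym]; rewrite mL /=; apply/idPn => mpi.
  have dm : \dim m = 2%N by apply/eqP; exact: HL.
  have Ypi : (Y <= X + Y + Z)%VS := subv_trans Yl1 l1pi.
  have dS := dim_add_meet dY dm Ypi Ym mpi.
  have ml1 : ~~ (m <= X + Y)%VS by apply: contra mpi => h; exact: subv_trans h l1pi.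
  have Yl2 : (Y <= Y + Z)%VS by vtac.
  have ml2 : ~~ (m <= Y + Z)%VS by apply: contra mpi => h; exact: subv_trans h l2pi.
  have dt1 := dim_add_meet dY dm Yl1 Ym ml1.
  have dt2 := dim_add_meet dY dm Yl2 Ym ml2.
  have ct1 : #|LinesIn L (X + Y + m)%VS| = (#|F| + 1)%N.
    have : (1 < #|LinesIn L (X + Y + m)%VS|)%N.
      apply/card_gt1P; exists (X + Y)%VS, m; rewrite !inE l1L mL addvSl addvSr /=.
      by split => //; apply/eqP => e; move: mpi; rewrite -e l1pi.
    have dt : is_plane (X + Y + m)%VS by rewrite /is_plane; apply/eqP; clear - dt1 d1; lia.
    by case: (Pl _ dt) => ->.
  have ct2 : #|LinesIn L (Y + Z + m)%VS| = (#|F| + 1)%N.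
    have : (1 < #|LinesIn L (Y + Z + m)%VS|)%N.
      apply/card_gt1P; exists (Y + Z)%VS, m; rewrite !inE l2L mL addvSl addvSr /=.
      by split => //; apply/eqP => e; move: mpi; rewrite -e l2pi.
    have dt : is_plane (Y + Z + m)%VS by rewrite /is_plane; apply/eqP; clear - dt2 d2; lia.
    by case: (Pl _ dt) => ->.
  have t1pi : ~~ (X + Y + m <= X + Y + Z)%VS.
    by apply: contra mpi => h; exact: subv_trans (addvSr _ _) h.
  have t2pi : ~~ (Y + Z + m <= X + Y + Z)%VS.
    by apply: contra mpi => h; exact: subv_trans (addvSr _ _) h.
  have t12 : ~~ (X + Y + m <= Y + Z + m)%VS.
    apply: contra mpi => h.
    have pit2 : (X + Y + Z <= Y + Z + m)%VS.
      rewrite subv_add (subv_trans (addvSl _ _) h) /=.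
      by apply: subv_trans (addvSl _ _); vtac.
    have e := eq_dim_sub pit2 (_ : (\dim (Y + Z + m) <= \dim (X + Y + Z))%N).
    rewrite e; first exact: addvSr. clear - dt2 d2 dpi; lia.
  have i1 : (#|LinesIn L (X + Y + m)%VS :&: LinesIn L (X + Y + Z)%VS| <= 1)%N.
    apply: leq_trans (subset_leq_card (LinesI _ _ _)) _.
    apply: small_lines => //; have := cap_small t1pi; clear - dt1 d1; lia.
  have i2 : (#|LinesIn L (Y + Z + m)%VS :&: LinesIn L (X + Y + Z)%VS| <= 1)%N.
    apply: leq_trans (subset_leq_card (LinesI _ _ _)) _.
    apply: small_lines => //; have := cap_small t2pi; clear - dt2 d2; lia.
  have i3 : (#|LinesIn L (X + Y + m)%VS :&: LinesIn L (Y + Z + m)%VS| <= 1)%N.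
    apply: leq_trans (subset_leq_card (LinesI _ _ _)) _.
    apply: small_lines => //; have := cap_small t12; clear - dt1 d1; lia.
  set T1 := LinesIn L (X + Y + m)%VS in ct1 i1 i3.
  set T2 := LinesIn L (Y + Z + m)%VS in ct2 i2 i3.
  set P0 := LinesIn L (X + Y + Z)%VS in cardpi i1 i2.
  have cS : (#|T1 :|: T2 :|: P0| <= #|LinesIn L (X + Y + Z + m)%VS|)%N.
    apply: subset_leq_card; rewrite !subUset !LinesS //; vtac.
  have := cardU_ge T1 T2; have := cardU_ge (T1 :|: T2) P0.
  have := cardIU_le T1 T2 P0.
  have dS4 : is_solid (X + Y + Z + m)%VS by rewrite /is_solid; apply/eqP; clear - dS dpi; lia.
  move=> h1 h2 h3; have hS := Sd _ dS4; rewrite /= in hS.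
  clear - ct1 ct2 cardpi i1 i2 i3 cS q2 hS h1 h2 h3; set a := #|T1 :|: T2 :|: P0| in cS h2.
  set b := #|T1 :|: T2| in h2 h3.
  set c := #|(T1 :|: T2) :&: P0| in h1 h2.
  set s := #|LinesIn L (X + Y + Z + m)%VS| in cS hS.
  set t1 := #|T1| in ct1 h3. set t2 := #|T2| in ct2 h3. set p0 := #|P0| in cardpi h2.
  set j1 := #|T1 :&: P0| in i1 h1. set j2 := #|T2 :&: P0| in i2 h1.
  set j3 := #|T1 :&: T2| in i3 h3. set qq := #|F| in q2 ct1 ct2 cardpi hS.
  clearbody a b c s t1 t2 p0 j1 j2 j3 qq; case: hS => hS; lia.
split; last by [].
apply/eqP; rewrite eqEcard sub /=; apply: eq_leq; rewrite cardY; exact: cardpi.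
Qed.


Lemma cardU_ge' (A B : {set PGsub F n}) :
  (#|A| + #|B| <= #|A :|: B| + #|A :&: B|)%N.
Proof. by rewrite cardsUI. Qed.

Lemma cardIU_le' (A B C : {set PGsub F n}) :
  (#|(A :|: B) :&: C| <= #|A :&: C| + #|B :&: C|)%N.
Proof. by rewrite setIUl -cardsUI leq_addr. Qed.

Lemma nonadj L X Y Z : (forall l, l \in L -> is_line l) ->
  is_point X -> is_point Y -> is_point Z -> X != Z ->
  (X + Y)%VS \in L -> (Y + Z)%VS \in L -> (X + Y)%VS != (Y + Z)%VS ->
  pencil L Y = LinesIn L (X + Y + Z)%VS ->
  pencil L X :&: pencil L Z = set0.
Proof.
move=> HL pX pY pZ XZ l1L l2L l12 eY.
apply/setP => l; rewrite !inE.
apply/negbTE/negP => /andP[/andP[lL Xl] /andP[_ Zl]].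
have dl : \dim l = 2%N by apply/eqP; exact: HL.
have ZX : ~~ (Z <= X)%VS.
  apply: contra XZ => h; apply/eqP; symmetry; apply: eq_dim_sub h _.
  by rewrite (eqP pX) (eqP pZ).
have dXZ : \dim (X + Z) = 2%N by rewrite (dim_add_pt (eqP pZ) ZX) (eqP pX).
have e : (X + Z)%VS = l by apply: eq_dim_sub; [rewrite subv_add Xl Zl | rewrite dl dXZ].
have : l \in pencil L Y by rewrite eY inE lL -e /=; vtac.
rewrite inE lL /= => Yl.
have d1 : \dim (X + Y) = 2%N by apply/eqP; exact: HL.
have d2 : \dim (Y + Z) = 2%N by apply/eqP; exact: HL.
have e1 : (X + Y)%VS = l by apply: eq_dim_sub; [rewrite subv_add Xl Yl | rewrite dl d1].
have e2 : (Y + Z)%VS = l by apply: eq_dim_sub; [rewrite subv_add Yl Zl | rewrite dl d2].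
by move: l12; rewrite e1 e2 eqxx.
Qed.

Lemma adj L X Y : (forall l, l \in L -> is_line l) -> (X + Y)%VS \in L ->
  (#|pencil L X :&: pencil L Y| <= 1)%N.
Proof.
move=> HL l1L; apply: (@leq_trans #|[set (X + Y)%VS]|); last by rewrite cards1.
apply: subset_leq_card; apply/subsetP => l; rewrite !inE.
move=> /andP[/andP[lL Xl] /andP[_ Yl]]; apply/eqP; symmetry; apply: eq_dim_sub.
  by rewrite subv_add Xl Yl.
by rewrite (eqP (HL _ l1L)) (eqP (HL _ lL)).
Qed.

Lemma main_count L A B C D E :
  (forall l, l \in L -> is_line l) ->
  cond_Pt L -> cond_Pl L -> cond_Sd L ->
  pentagon L A B C D E ->
  (5 * #|F| <= #|LinesIn L (A + B + C + D + E)%VS|)%N.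
Proof.
move=> HL Pt Pl Sd [[pA pB pC pD pE] uP [ABL BCL CDL DEL EAL] uL].
have h := uP; rewrite /= !inE !negb_or in h.
have h' := uL; rewrite /= !inE !negb_or in h'.
repeat match goal with H : is_true (_ && _) |- _ => case/andP: H => ? ? end.
have [eA cA] := pencil_plane HL Pt Pl Sd pE pA pB EAL ABL ltac:(first [done | by rewrite eq_sym]).
have [eB cB] := pencil_plane HL Pt Pl Sd pA pB pC ABL BCL ltac:(first [done | by rewrite eq_sym]).
have [eC cC] := pencil_plane HL Pt Pl Sd pB pC pD BCL CDL ltac:(first [done | by rewrite eq_sym]).
have [eD cD] := pencil_plane HL Pt Pl Sd pC pD pE CDL DEL ltac:(first [done | by rewrite eq_sym]).
have [eE cE] := pencil_plane HL Pt Pl Sd pD pE pA DEL EAL ltac:(first [done | by rewrite eq_sym]).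
have nAC := nonadj HL pA pB pC ltac:(first [done | by rewrite eq_sym]) ABL BCL ltac:(first [done | by rewrite eq_sym]) eB.
have nBD := nonadj HL pB pC pD ltac:(first [done | by rewrite eq_sym]) BCL CDL ltac:(first [done | by rewrite eq_sym]) eC.
have nCE := nonadj HL pC pD pE ltac:(first [done | by rewrite eq_sym]) CDL DEL ltac:(first [done | by rewrite eq_sym]) eD.
have nDA := nonadj HL pD pE pA ltac:(first [done | by rewrite eq_sym]) DEL EAL ltac:(first [done | by rewrite eq_sym]) eE.
have nEB := nonadj HL pE pA pB ltac:(first [done | by rewrite eq_sym]) EAL ABL ltac:(first [done | by rewrite eq_sym]) eA.
have aAB := adj HL ABL. have aBC := adj HL BCL. have aCD := adj HL CDL.
have aDE := adj HL DEL. have aEA := adj HL EAL.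
rewrite setIC in nDA. rewrite setIC in nEB. rewrite setIC in aEA.
set PA := pencil L A in cA nAC nDA aAB aEA eA *.
set PB := pencil L B in cB nBD nEB aAB aBC eB *.
set PC := pencil L C in cC nAC nCE aBC aCD eC *.
set PD := pencil L D in cD nBD nDA aCD aDE eD *.
set PE := pencil L E in cE nCE nEB aDE aEA eE *.
have sub : (#|PA :|: PB :|: PC :|: PD :|: PE| <= #|LinesIn L (A + B + C + D + E)%VS|)%N.
  apply: subset_leq_card; rewrite !subUset eA eB eC eD eE !LinesS //; vtac.
have := cardU_ge' PA PB.
have := cardU_ge' (PA :|: PB) PC. have := cardIU_le' PA PB PC.
have := cardU_ge' (PA :|: PB :|: PC) PD. have := cardIU_le' (PA :|: PB) PC PD.
have := cardIU_le' PA PB PD.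
have := cardU_ge' (PA :|: PB :|: PC :|: PD) PE.
have := cardIU_le' (PA :|: PB :|: PC) PD PE. have := cardIU_le' (PA :|: PB) PC PE.
have := cardIU_le' PA PB PE.
rewrite nAC nBD nCE nDA nEB !cards0 cA cB cC cD cE.
move: sub aAB aBC aCD aDE aEA.
clear; lia.
Qed.

End Aux.
Unset Implicit Arguments.

Theorem lemma4 (F : finFieldType) (n : nat) (L : {set PGsub F n})
  (A B C D E : PGsub F n) :
  (forall l, l \in L -> is_line l) ->
  L != set0 ->
  cond_Pt L -> cond_Pl L -> cond_Sd L -> cond_To L ->
  pentagon L A B C D E ->
  let U := (A + B + C + D + E)%VS in
  (5 * #|F| <= #|LinesIn L U|)%N /\ \dim U = 5%N.
Proof.
move=> HL _ Pt Pl Sd _ pent U.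
have cU := main_count HL Pt Pl Sd pent.
have q2 : (1 < #|F|)%N := card_finNzRing_gt1 F.
split; first exact: cU.
case: pent => [[pA pB pC pD pE] _ _ _].
have ds := fun V W : PGsub F n => (dimv_add_leqif V W).1.
have dU : (\dim U <= 5)%N.
  have := ds (A + B + C + D)%VS E; have := ds (A + B + C)%VS D.
  have := ds (A + B)%VS C; have := ds A B.
  rewrite (eqP pA) (eqP pB) (eqP pC) (eqP pD) (eqP pE) /U; clear; lia.
have : (\dim U <= 2 \/ \dim U = 3 \/ \dim U = 4 \/ \dim U = 5)%N by lia.
case=> [h|[h|[h|h]]].
- have := @small_lines _ _ L U HL h; move: cU q2; rewrite /U.
  set k := #|LinesIn L _|; set qq := #|F|; clearbody k qq; clear; lia.
- have := Pl U (introT eqP h); rewrite /=; move: cU q2; rewrite /U.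
  set k := #|LinesIn L _|; set qq := #|F|; clearbody k qq; clear; move=> ? ?; case=> ?; lia.
- have := Sd U (introT eqP h); rewrite /=; move: cU q2; rewrite /U.
  set k := #|LinesIn L _|; set qq := #|F|; clearbody k qq; clear; move=> ? ?; case=> ?; lia.
- exact: h.
Qed.
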